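(* Let $M$ be an $n\times d$ matrix (a database). For every nonempty subset of columns $J\subseteq[d]$, every family of thresholds $\{t_j\}_{j\in J}\subseteq[0,1]$, and every $j^\star\in J$, \[ Q_J\Big(\prod_{j\in J} t_j\Big)\;\le\;\sum_{j\in J} Q_j(t_j)\;+\;\sum_{j\in J\setminus\{j^\star\}} t_j\,|V_j| . \]
   Context: $M$ has $n$ rows (users) and $d$ columns (features); $M_{ij}$ is the value of feature $j$ for user $i$. For a column $j$, $V_j=\{M_{ij}: i\in[n]\}$, and for $J\subseteq[d]$, $V_J=\prod_{j\in J}V_j$ (Cartesian product). The empirical joint distribution of the columns $J$ is $p_J(v)=\frac{1}{n}\,|\{i\in[n]: M_{ij}=v_j \text{ for all } j\in J\}|$ for $v\in V_J$. The exposure of columns $J$ at threshold $t$ is \[ Q_J(t)=\sum_{v\in V_J} p_J(v)\,\mathbf 1[p_J(v)<t], \] i.e. the fraction of users whose restricted row (to columns $J$) is shared by fewer than $tn$ users. For a single column $j$, $Q_j:=Q_{\{j\}}$ and $p_j:=p_{\{j\}}$. *)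

(* Defs.v *)
From HB Require Import structures.
From mathcomp Require Import all_boot all_order all_algebra.
Set Implicit Arguments. Unset Strict Implicit. Unset Printing Implicit Defensive.
Import Order.TTheory GRing.Theory Num.Theory.
Local Open Scope ring_scope.

Section Exposure.
Variables (R : realFieldType) (T : finType) (n d : nat) (M : 'M[T]_(n, d)).

Definition colsub (J : {set 'I_d}) : finType := {j : 'I_d | j \in J}.

Definition Vcol (j : 'I_d) : {set T} := [set M i j | i : 'I_n].

Definition VJ (J : {set 'I_d}) : {set {ffun colsub J -> T}} :=
  [set v : {ffun colsub J -> T} | [forall j : colsub J, v j \in Vcol (val j)]].

Definition pJ (J : {set 'I_d}) (v : {ffun colsub J -> T}) : R :=
  (#|[set i : 'I_n | [forall j : colsub J, M i (val j) == v j]]|%:R) / n%:R.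

Definition QJ (J : {set 'I_d}) (t : R) : R :=
  \sum_(v in VJ J) (pJ v : R) * ((pJ v < t)%R)%:R.

Definition Qj (j : 'I_d) (t : R) : R := QJ [set j] t.

End Exposure.

(* Main.v *)
Require Import Defs.
From mathcomp Require Import all_boot all_order all_algebra.
From mathcomp Require Import ring lra.
Set Implicit Arguments. Unset Strict Implicit. Unset Printing Implicit Defensive.
Import Order.TTheory GRing.Theory Num.Theory.
Local Open Scope ring_scope.

Section Aux.
Variables (R : realFieldType) (T : finType) (n d : nat) (M : 'M[T]_(n, d)).

Definition S (A : {set 'I_d}) (i : 'I_n) : {set 'I_n} :=
  [set k | [forall j in A, M k j == M i j]].

Definition E (A : {set 'I_d}) (s : R) : R :=
  \sum_(i < n) (((#|S A i|%:R / n%:R < s)%R)%:R / n%:R).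

Definition rowJ (A : {set 'I_d}) (i : 'I_n) : {ffun Defs.colsub A -> T} :=
  [ffun j : Defs.colsub A => M i (val j)].

Lemma S_row A i v : rowJ A i = v ->
  [set k : 'I_n | [forall j : Defs.colsub A, M k (val j) == v j]] = S A i.
Proof.
move=> <-; apply/setP=> k; rewrite !inE.
apply/forallP/forallP => /= H j.
- apply/implyP=> jA. have := H (exist _ j jA). by rewrite ffunE.
- rewrite ffunE. case: j => j jA /=. exact: (implyP (H j) jA).
Qed.

Lemma QJ_E A s : QJ (R:=R) M A s = E A s.
Proof.
rewrite /E (partition_big (rowJ A) (mem (VJ M A))) /=; last first.
  move=> i _; rewrite inE; apply/forallP=> j; rewrite ffunE.
  by apply/imsetP; exists i.
rewrite /QJ; apply: eq_bigr => v _.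
case: (pickP (fun i => rowJ A i == v)) => [i0 /eqP Hi0|H0]; last first.
  rewrite big_pred0 //. rewrite /pJ.
  suff -> : [set i : 'I_n | [forall j : Defs.colsub A, M i (val j) == v j]] = set0.
    by rewrite cards0 mul0r mul0r.
  apply/setP => k; rewrite !inE. apply/negbTE/negP => /forallP Hk.
  have := H0 k; suff -> : rowJ A k == v by [].
  apply/eqP/ffunP => j; rewrite ffunE; exact/eqP.
rewrite /pJ (S_row Hi0).
have HS : forall i, rowJ A i == v -> S A i = S A i0.
  move=> i /eqP Hi; by rewrite -(S_row Hi) (S_row Hi0).
rewrite (eq_bigr (fun _ => (((#|S A i0|%:R / n%:R < s)%R)%:R / n%:R : R))); last first.
  by move=> i /HS ->.
rewrite sumr_const.
have -> : #|[pred i | rowJ A i == v]| = #|S A i0|.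
  rewrite -(S_row Hi0); apply: eq_card => k; rewrite !inE /=.
  apply/idP/idP => [/eqP <-|/forallP Hk]; first by apply/forallP => j; rewrite ffunE.
  apply/eqP/ffunP => j; rewrite ffunE; exact/eqP/Hk.
by rewrite -mulr_natr; ring.
Qed.

Lemma card_img (X : {set 'I_n}) (g : 'I_n -> T) :
  \sum_(i in X) (#|[set l in X | g l == g i]|%:R)^-1 = #|g @: X|%:R :> R.
Proof.
rewrite (partition_big g (mem (g @: X))) /=; last by move=> i iX; apply: imset_f.
rewrite -[RHS]mulr1n -sumr_const; apply: eq_bigr => w /imsetP [i0 i0X ->].
rewrite (eq_bigr (fun _ => (#|[set l in X | g l == g i0]|%:R)^-1)); last first.
  by move=> i /andP [_ /eqP ->].
rewrite sumr_const.
have -> : #|[pred i | (i \in X) && (g i == g i0)]| = #|[set l in X | g l == g i0]|.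
  by apply: eq_card => k; rewrite !inE.
set c := #|_|; rewrite -[_^-1 *+ c]mulr_natr mulVf // pnatr_eq0 -lt0n; apply/card_gt0P; exists i0.
by rewrite inE i0X eqxx.
Qed.

Lemma S_refl A i : i \in S A i.
Proof. by rewrite inE; apply/forallP => j; apply/implyP. Qed.

Lemma S_sym A i k : (k \in S A i) = (i \in S A k).
Proof.
rewrite !inE; apply/forallP/forallP => H j; apply/implyP => jA;
  by rewrite eq_sym (implyP (H j) jA).
Qed.

Lemma S_eq A i k : k \in S A i -> S A k = S A i.
Proof.
rewrite inE => /forallP H; apply/setP => l; rewrite !inE.
apply/forallP/forallP => H2 j; apply/implyP => jA.
- by rewrite (eqP (implyP (H2 j) jA)) (implyP (H j) jA).
- by rewrite (eqP (implyP (H2 j) jA)) eq_sym (implyP (H j) jA).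
Qed.

Lemma S_U1 A j i : S (A :|: [set j]) i = [set l in S A i | M l j == M i j].
Proof.
apply/setP => l; rewrite !inE; apply/forallP/andP => [H|[/forallP H1 H2] j'].
- split; last by have := H j; rewrite !inE eqxx orbT.
  apply/forallP => j'; apply/implyP => jA; have := H j'; by rewrite !inE jA.
- rewrite !inE; apply/implyP => /orP [jA|/eqP ->] //; exact: (implyP (H1 j')).
Qed.

Lemma key A j :
  \sum_(i < n) (#|S A i|%:R / #|S (A :|: [set j]) i|%:R : R)
    <= n%:R * #|Vcol M j|%:R.
Proof.
have -> : \sum_(i < n) (#|S A i|%:R / #|S (A :|: [set j]) i|%:R : R)
   = \sum_(k < n) \sum_(i in S A k)
        (#|[set l in S A k | M l j == M i j]|%:R)^-1.
  rewrite (eq_bigr (fun i => \sum_(k < n) if k \in S A i then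
      (#|S (A :|: [set j]) i|%:R)^-1 else 0 : R)); last first.
    move=> i _; rewrite -big_mkcond /= sumr_const mulr_natl //.
  rewrite exchange_big /=; apply: eq_bigr => k _.
  rewrite [RHS]big_mkcond /=; apply: eq_bigr => i _.
  rewrite S_sym; case: ifP => // ik.
  by rewrite S_U1 (S_eq ik).
apply: (@le_trans _ _ (\sum_(k < n) (#|Vcol M j|%:R : R))).
  apply: ler_sum => k _; rewrite card_img ler_nat; apply: subset_leq_card.
  by apply/subsetP => w /imsetP [i _ ->]; apply/imsetP; exists i.
by rewrite sumr_const card_ord mulr_natl.
Qed.

Lemma divn_lt (x y : R) : x / n%:R < y / n%:R -> x < y.
Proof.
have [->|np] := posnP n; first by rewrite invr0 !mulr0 ltxx.
by rewrite ltr_pM2r // invr_gt0 ltr0n.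
Qed.

Lemma card_S_gt0 A i : (0 : R) < #|S A i|%:R.
Proof. by rewrite ltr0n; apply/card_gt0P; exists i; apply: S_refl. Qed.

Lemma E_ge0 A s : 0 <= E A s.
Proof. by apply: sumr_ge0 => i _; rewrite divr_ge0. Qed.

Lemma step A j s (tt : R) : 0 <= tt ->
  E (A :|: [set j]) (s * tt) <= E A s + tt * #|Vcol M j|%:R.
Proof.
move=> t0.
set cA := fun i => (#|S A i|%:R : R).
set cB := fun i => (#|S (A :|: [set j]) i|%:R : R).
have pw : forall i, ((cB i / n%:R < s * tt)%R)%:R
                <= ((cA i / n%:R < s)%R)%:R + tt * (cA i / cB i) :> R.
  move=> i; have cBp : 0 < cB i by apply: card_S_gt0.
  have cAp : 0 < cA i by apply: card_S_gt0.
  have h0 : 0 <= tt * (cA i / cB i) by rewrite mulr_ge0 // divr_ge0 // ltW.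
  have [_|sle] := ltP (cA i / n%:R) s.
    by case: (cB i / n%:R < s * tt)%R; rewrite ?mulr1n ?mulr0n; lra.
  have [lt|_] := ltP (cB i / n%:R) (s * tt); last by rewrite mulr0n add0r.
  rewrite mulr0n mulr1n add0r.
  have : cB i < tt * cA i.
    apply: divn_lt; apply: (lt_le_trans lt).
    by rewrite mulrC -mulrA ler_wpM2l.
  by rewrite mulrA ler_pdivlMr // mul1r => /ltW.
apply: (@le_trans _ _ (\sum_(i < n) (((cA i / n%:R < s)%R)%:R / n%:R
        + tt / n%:R * (cA i / cB i)))).
  apply: ler_sum => i _; rewrite mulrAC -mulrDl ler_wpM2r ?invr_ge0 //.
  by apply: pw.
rewrite big_split /= lerD2l -mulr_sumr.
apply: (@le_trans _ _ (tt / n%:R * (n%:R * #|Vcol M j|%:R))).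
  by apply: ler_wpM2l; [rewrite divr_ge0 | apply: key].
have [n0|np] := eqVneq (n%:R : R) 0.
  by rewrite n0 invr0 mulr0 mul0r mulr_ge0.
by rewrite mulrA divfK.
Qed.

Lemma chain (t : 'I_d -> R) js (s : seq 'I_d) :
  (forall j, j \in s -> 0 <= t j) ->
  E (js |: [set x in s]) (t js * \prod_(j <- s) t j)
    <= E [set js] (t js) + \sum_(j <- s) t j * #|Vcol M j|%:R.
Proof.
elim: s => [|a s IH] Ht.
  have -> : js |: [set x in [::]] = [set js].
    by apply/setP => x; rewrite !inE orbF.
  by rewrite !big_nil mulr1 addr0.
have -> : js |: [set x in a :: s] = (js |: [set x in s]) :|: [set a].
  apply/setP => x; rewrite !inE.
  by case: (x == a); case: (x == js); case: (x \in s).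
rewrite !big_cons mulrCA mulrC.
apply: le_trans (step _ _ _ (Ht a (mem_head _ _))) _.
rewrite [X in _ <= X]addrCA [X in X <= _]addrC lerD2l.
by apply: IH => j js'; apply: Ht; rewrite inE js' orbT.
Qed.
End Aux.

Unset Implicit Arguments.
Set Strict Implicit.

Theorem theorem1 (R : realFieldType) (T : finType) (n d : nat)
  (M : 'M[T]_(n, d)) (J : {set 'I_d}) (t : 'I_d -> R) (jstar : 'I_d) :
  J != set0 ->
  (forall j, j \in J -> 0 <= t j <= 1) ->
  jstar \in J ->
  QJ M J (\prod_(j in J) t j)
    <= \sum_(j in J) Qj M j (t j) + \sum_(j in J :\ jstar) t j * #|Vcol M j|%:R.
Proof.
move=> _ Ht js.
have HJ : J = jstar |: [set x in enum (J :\ jstar)].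
  apply/setP => x; rewrite !inE mem_enum !inE.
  by case: eqP => // ->; rewrite js.
rewrite (big_setD1 jstar js) /= QJ_E.
have := @chain R T n d M t jstar (enum (J :\ jstar)).
rewrite -HJ !big_enum /=.
move=> H; apply: le_trans (H _) _.
  move=> j; rewrite mem_enum inE => /andP [_ /Ht /andP []] //.
rewrite lerD2r (big_setD1 _ js) /= /Qj QJ_E lerDl.
by apply: sumr_ge0 => j _; rewrite QJ_E E_ge0.
Qed.
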